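(* Let $K_1,K_2>0$. For $0<x\le K_1$, $v>0$ and $x^2v\ge K_2$, \[ \varepsilon_1(x,v)-x\,\overline{\varepsilon_1(1/x,x^2v)}\ll(x^2v)^{-1/2}, \] where the implied constant depends only on $K_1$ and $K_2$, and \[ \varepsilon_1(x,v)=-\int_v^\infty\frac{e^{2\pi itx}}{\pi t}(\log t+2\gamma)\,dt+\frac{e^{2\pi ivx}}{v}\Delta(v)-\int_v^\infty\Delta(t)\frac{e^{2\pi itx}}{t^2}\,dt. \]
   Context: $\tau(n)$ is the number of divisors of $n$, $\gamma$ is Euler's constant, and for $t>0$, $\Delta(t)=\sum_{n\le t}\tau(n)-t(\log t+2\gamma-1)$. The first integral in $\varepsilon_1$ is an improper integral. *)

(* Defs.v *)
From Stdlib Require Import Reals Lra List.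
From Coquelicot Require Import Coquelicot.
Import ListNotations.
Open Scope R_scope.

Definition tau (n : nat) : nat :=
  length (filter (fun d => Nat.eqb (n mod d) 0) (seq 1 n)%nat).

Definition divisor_sum (N : nat) : nat := fold_right Nat.add 0%nat (map tau (seq 1 N)).

Definition EulerGamma : R :=
  real (Lim_seq (fun n => sum_f_R0 (fun k => / INR (k + 1)) n - ln (INR (n + 1)))).

Definition Delta (t : R) : R :=
  INR (divisor_sum (Z.to_nat (Int_part t))) - t * (ln t + 2 * EulerGamma - 1).

Definition ImpInt (f : R -> R) (a : R) : R :=
  real (Lim (fun T => RInt f a T) p_infty).

(* real and imaginary parts of eps_1(x, v), using e^{2 pi i t x} = cos + i sin *)
Definition eps1_re (x v : R) : R :=
  - ImpInt (fun t => cos (2 * PI * t * x) / (PI * t) * (ln t + 2 * EulerGamma)) v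
  + cos (2 * PI * v * x) / v * Delta v
  - ImpInt (fun t => Delta t * cos (2 * PI * t * x) / t ^ 2) v.

Definition eps1_im (x v : R) : R :=
  - ImpInt (fun t => sin (2 * PI * t * x) / (PI * t) * (ln t + 2 * EulerGamma)) v
  + sin (2 * PI * v * x) / v * Delta v
  - ImpInt (fun t => Delta t * sin (2 * PI * t * x) / t ^ 2) v.

Definition eps1 (x v : R) : C := (eps1_re x v, eps1_im x v).

(* Main.v *)
Require Import Defs.
From Stdlib Require Import Reals.
From Stdlib Require Import Lra Lia ZArith List.
From Coquelicot Require Import Coquelicot.
Open Scope R_scope.


Lemma ImpInt_bound (f : R -> R) (a B : R) :
  (forall T, a <= T -> Rabs (RInt f a T) <= B) -> Rabs (ImpInt f a) <= B.
Proof.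
  intros H. unfold ImpInt, Lim. simpl.
  set (u := fun n : nat => RInt f a (INR n)).
  assert (Ev : eventually (fun n => - B <= u n <= B)).
  { destruct (archimed (Rabs a)) as [Ha _].
    exists (Z.to_nat (up (Rabs a))). intros n Hn.
    assert (a <= INR n).
    { apply le_INR in Hn. rewrite INR_IZR_INZ, Z2Nat.id in Hn.
      - pose proof (Rle_abs a). lra.
      - apply le_IZR. pose proof (Rabs_pos a). lra. }
    specialize (H _ H0). unfold u. apply Rabs_le_between in H. exact H. }
  assert (H1 : Rbar_le (LimSup_seq u) B).
  { rewrite <- (LimSup_seq_const B). apply LimSup_le.
    destruct Ev as [N HN]. exists N. intros n Hn. apply HN; auto. }
  assert (H2 : Rbar_le (-B) (LimInf_seq u)).
  { rewrite <- (LimInf_seq_const (-B)). apply LimInf_le.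
    destruct Ev as [N HN]. exists N. intros n Hn. apply HN; auto. }
  pose proof (LimSup_LimInf_seq_le u) as H3.
  fold u. unfold Lim_seq.
  destruct (LimSup_seq u) as [s| |]; destruct (LimInf_seq u) as [i| |];
    simpl in *; try tauto.
  apply Rabs_le_between. lra.
Qed.


Lemma Lim_seq_between (u : nat -> R) (a b : R) :
  eventually (fun n => a <= u n <= b) -> a <= real (Lim_seq u) <= b.
Proof.
  intros Ev.
  assert (H1 : Rbar_le (LimSup_seq u) b).
  { rewrite <- (LimSup_seq_const b). apply LimSup_le.
    destruct Ev as [N HN]. exists N. intros n Hn. apply HN; auto. }
  assert (H2 : Rbar_le a (LimInf_seq u)).
  { rewrite <- (LimInf_seq_const a). apply LimInf_le.
    destruct Ev as [N HN]. exists N. intros n Hn. apply HN; auto. }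
  pose proof (LimSup_LimInf_seq_le u) as H3.
  unfold Lim_seq.
  destruct (LimSup_seq u) as [s| |]; destruct (LimInf_seq u) as [i| |];
    simpl in *; try tauto. lra.
Qed.

Lemma ln_le_m1 y : 0 < y -> ln y <= y - 1.
Proof.
  intros Hy. destruct (Rle_lt_dec (ln y) (y-1)) as [h|h]; auto.
  apply exp_increasing in h. rewrite exp_ln in h by auto.
  pose proof (exp_ineq1_le (y-1)). lra.
Qed.

Lemma ln_ge y : 0 < y -> 1 - / y <= ln y.
Proof.
  intros Hy. pose proof (ln_le_m1 (/y) (Rinv_0_lt_compat _ Hy)).
  rewrite ln_Rinv in H by auto. lra.
Qed.

Definition sg (n : nat) : R :=
  sum_f_R0 (fun k => / INR (k + 1)) n - ln (INR (n + 1)).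

Lemma sg_S n : sg (S n) = sg n + / INR (n + 2) - (ln (INR (n+2)) - ln (INR (n+1))).
Proof.
  unfold sg. rewrite tech5. replace (S n + 1)%nat with (n+2)%nat by lia. lra.
Qed.

Lemma ln_diff_bounds n :
  / INR (n+2) <= ln (INR (n+2)) - ln (INR (n+1)) <= / INR (n+1).
Proof.
  assert (h1 : 0 < INR (n+1)) by (apply lt_0_INR; lia).
  assert (h2 : INR (n+2) = INR (n+1) + 1) by (replace (n+2)%nat with (S (n+1)) by lia; apply S_INR).
  rewrite <- ln_div by lra.
  set (q := INR (n + 2) / INR (n + 1)).
  assert (hq : 0 < q) by (unfold q; apply Rdiv_lt_0_compat; lra).
  split.
  - pose proof (ln_ge q hq). unfold q in *.
    replace (/ INR (n+2)) with (1 - / (INR (n + 2) / INR (n + 1))); [lra|].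
    rewrite h2. field. lra.
  - pose proof (ln_le_m1 q hq). unfold q in *. rewrite h2 in *.
    replace ((INR (n + 1) + 1) / INR (n + 1) - 1) with (/ INR (n+1)) in H; [lra|].
    field. lra.
Qed.

Lemma sg_decr n m : (n <= m)%nat -> sg m <= sg n.
Proof.
  induction 1. lra. rewrite sg_S. pose proof (ln_diff_bounds m). lra.
Qed.

Lemma sg_lower_incr n m : (n <= m)%nat -> sg n - / INR (n+1) <= sg m - / INR (m+1).
Proof.
  induction 1. lra. rewrite sg_S. pose proof (ln_diff_bounds m).
  replace (S m + 1)%nat with (m+2)%nat by lia. lra.
Qed.

Lemma gamma_bounds n : sg n - / INR (n+1) <= EulerGamma <= sg n.
Proof.
  unfold EulerGamma. apply Lim_seq_between. exists n. intros m Hm.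
  split.
  - pose proof (sg_lower_incr n m Hm).
    assert (0 < / INR (m+1)) by (apply Rinv_0_lt_compat, lt_0_INR; lia).
    unfold sg in *. lra.
  - apply (sg_decr n m Hm).
Qed.

Fixpoint Hs (s : nat) : R := match s with O => 0 | S k => Hs k + / INR (S k) end.

Lemma Hs_sg s : Hs (S s) = sg s + ln (INR (s+1)).
Proof.
  unfold sg. induction s. simpl. lra.
  change (Hs (S (S s))) with (Hs (S s) + / INR (S (S s))). rewrite IHs, tech5.
  replace (S s + 1)%nat with (S (S s)) by lia. replace (s+1)%nat with (S s) by lia. lra.
Qed.

Lemma Hs_bounds s : (1 <= s)%nat ->
  EulerGamma <= Hs s - ln (INR s) <= EulerGamma + / INR s.
Proof.
  intros Hs1. destruct s as [|s]; [lia|].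
  rewrite Hs_sg. pose proof (gamma_bounds s).
  replace (s+1)%nat with (S s) in * by lia. lra.
Qed.


Fixpoint sumR (f : nat -> R) (n : nat) : R :=
  match n with O => 0 | S k => sumR f k + f (S k) end.

Definition bR (b : bool) : R := if b then 1 else 0.

Lemma sumR_ext f g n : (forall k, (1 <= k <= n)%nat -> f k = g k) -> sumR f n = sumR g n.
Proof.
  induction n; intros H; simpl; auto.
  rewrite IHn by (intros; apply H; lia). rewrite H by lia. auto.
Qed.

Lemma sumR_plus f g n : sumR (fun k => f k + g k) n = sumR f n + sumR g n.
Proof. induction n; simpl; lra. Qed.
Lemma sumR_minus f g n : sumR (fun k => f k - g k) n = sumR f n - sumR g n.
Proof. induction n; simpl; lra. Qed.
Lemma sumR_scal c f n : sumR (fun k => c * f k) n = c * sumR f n.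
Proof. induction n; simpl; lra. Qed.
Lemma sumR_const c n : sumR (fun _ => c) n = INR n * c.
Proof. induction n; simpl sumR. simpl; lra. rewrite S_INR. lra. Qed.
Lemma sumR_exchange (f : nat -> nat -> R) n m :
  sumR (fun a => sumR (fun b => f a b) m) n = sumR (fun b => sumR (fun a => f a b) n) m.
Proof.
  induction n; simpl.
  - induction m; simpl; lra.
  - rewrite IHn, <- sumR_plus. auto.
Qed.
Lemma sumR_trunc f s n : (s <= n)%nat ->
  sumR (fun k => bR (Nat.leb k s) * f k) n = sumR f s.
Proof.
  induction 1.
  - apply sumR_ext. intros k Hk. unfold bR. rewrite (proj2 (Nat.leb_le k s)) by lia. lra.
  - cbn [sumR]. rewrite IHle. unfold bR. rewrite (proj2 (Nat.leb_gt (S m) s)) by lia. lra.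
Qed.

Lemma fold_add_acc l x : fold_right Nat.add x l = (fold_right Nat.add 0 l + x)%nat.
Proof. induction l; simpl; lia. Qed.

Lemma divisor_sum_R N : INR (divisor_sum N) = sumR (fun n => INR (tau n)) N.
Proof.
  induction N. reflexivity.
  unfold divisor_sum in *. rewrite seq_S, map_app, fold_right_app. cbn [map fold_right].
  rewrite fold_add_acc, plus_INR, IHN. replace (1 + N)%nat with (S N) by lia.
  rewrite Nat.add_0_r. reflexivity.
Qed.

Lemma filter_len_sum (p : nat -> bool) n :
  INR (length (filter p (seq 1 n))) = sumR (fun d => bR (p d)) n.
Proof.
  induction n. reflexivity.
  rewrite seq_S, filter_app, length_app, plus_INR, IHn. simpl.
  replace (1 + n)%nat with (S n) by lia. unfold bR. destruct (p (S n)); simpl; lra.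
Qed.

Lemma tau_R n : INR (tau n) = sumR (fun d => bR (Nat.eqb (n mod d) 0)) n.
Proof. apply filter_len_sum. Qed.

Lemma div_succ N d : (1 <= d)%nat ->
  (S N / d = N / d + (if Nat.eqb (S N mod d) 0 then 1 else 0))%nat.
Proof.
  intros Hd.
  pose proof (Nat.div_mod N d ltac:(lia)). pose proof (Nat.mod_upper_bound N d ltac:(lia)).
  set (q := (N / d)%nat) in *. set (r := (N mod d)%nat) in *.
  destruct (Nat.eq_dec (S r) d).
  - assert (S N / d = S q)%nat by (symmetry; apply (Nat.div_unique _ _ _ 0); lia).
    assert (S N mod d = 0)%nat by (symmetry; apply (Nat.mod_unique _ _ (S q)); lia).
    rewrite H1, H2. simpl. lia.
  - assert (S N / d = q)%nat by (symmetry; apply (Nat.div_unique _ _ _ (S r)); lia).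
    assert (S N mod d = S r)%nat by (symmetry; apply (Nat.mod_unique _ _ q); lia).
    rewrite H1, H2. simpl. lia.
Qed.

Lemma divisor_sum_div N : INR (divisor_sum N) = sumR (fun d => INR (N / d)) N.
Proof.
  rewrite divisor_sum_R. induction N. reflexivity.
  change (sumR (fun n => INR (tau n)) (S N)) with (sumR (fun n => INR (tau n)) N + INR (tau (S N))).
  rewrite IHN, tau_R.
  change (sumR (fun d => INR (S N / d)) (S N))
    with (sumR (fun d => INR (S N / d)) N + INR (S N / S N)).
  rewrite Nat.div_same by lia.
  change (sumR (fun d => bR (S N mod d =? 0)%nat) (S N))
    with (sumR (fun d => bR (S N mod d =? 0)%nat) N + bR (S N mod S N =? 0)%nat).
  rewrite Nat.Div0.mod_same. simpl bR.
  rewrite (sumR_ext (fun d => INR (S N / d)) (fun d => INR (N / d) + bR (S N mod d =? 0)%nat)).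
  - rewrite sumR_plus. simpl INR. lra.
  - intros k Hk. rewrite div_succ by lia. rewrite plus_INR. unfold bR.
    destruct (S N mod k =? 0)%nat; simpl; lra.
Qed.

Lemma count_b N d M : (1 <= d)%nat ->
  sumR (fun b => bR (Nat.leb (d * b) N)) M = INR (Nat.min M (N / d)).
Proof.
  intros Hd. induction M. reflexivity.
  simpl sumR. rewrite IHM. unfold bR.
  destruct (Nat.leb (d * S M) N) eqn:E.
  - apply Nat.leb_le in E. assert (S M <= N / d)%nat by (apply Nat.div_le_lower_bound; lia).
    rewrite !Nat.min_l by lia. rewrite S_INR. lra.
  - apply Nat.leb_gt in E.
    assert (N / d < S M)%nat by (apply Nat.Div0.div_lt_upper_bound; lia).
    rewrite !Nat.min_r by lia. lra.
Qed.

Lemma div_as_count N d : (1 <= d)%nat ->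
  INR (N / d) = sumR (fun b => bR (Nat.leb (d * b) N)) N.
Proof.
  intros Hd. rewrite count_b by auto. f_equal. rewrite Nat.min_r; auto.
  apply Nat.Div0.div_le_upper_bound. nia.
Qed.

Lemma hyp_E N s : (s <= N)%nat -> sumR (fun a => sumR (fun b => bR (Nat.leb (a * b) N) * bR (Nat.leb a s)) N) N
            = sumR (fun a => INR (N / a)) s.
Proof. intros HsN.
    rewrite <- (sumR_trunc _ s N HsN). apply sumR_ext. intros a Ha.
    rewrite (sumR_ext _ (fun b => bR (Nat.leb a s) * bR (Nat.leb (a * b) N))) by (intros; lra).
    rewrite sumR_scal, <- div_as_count by lia. auto. Qed.
Lemma hyp_E2 N s : (s <= N)%nat -> sumR (fun a => sumR (fun b => bR (Nat.leb a s) * bR (Nat.leb b s)) N) N = INR s * INR s.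
Proof. intros HsN.
   rewrite (sumR_ext _ (fun a => bR (Nat.leb a s) * INR s)).
    - rewrite (sumR_trunc (fun _ => INR s) s N HsN), sumR_const. auto.
    - intros a Ha. rewrite sumR_scal. f_equal.
      rewrite (sumR_ext _ (fun b => bR (Nat.leb b s) * 1)) by (intros; lra).
      rewrite (sumR_trunc (fun _ => 1) s N HsN), sumR_const. lra. Qed.

Lemma hyperbola N : let s := Nat.sqrt N in
  INR (divisor_sum N) = 2 * sumR (fun a => INR (N / a)) s - INR s * INR s.
Proof.
  intros s. pose proof (Nat.sqrt_spec N ltac:(lia)) as Hs. fold s in Hs.
  assert (HsN : (s <= N)%nat) by nia.
  rewrite divisor_sum_div.
  rewrite (sumR_ext _ (fun a => sumR (fun b =>
     bR (Nat.leb (a * b) N) * bR (Nat.leb a s) + bR (Nat.leb (b * a) N) * bR (Nat.leb b s)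
     - bR (Nat.leb a s) * bR (Nat.leb b s)) N)).
  2:{ intros a Ha. rewrite div_as_count by lia. apply sumR_ext. intros b Hb.
      rewrite (Nat.mul_comm b a). unfold bR.
      destruct (Nat.leb (a*b) N) eqn:E1; destruct (Nat.leb a s) eqn:E2;
      destruct (Nat.leb b s) eqn:E3; try lra;
      apply Nat.leb_le in E1 || apply Nat.leb_gt in E1;
      apply Nat.leb_le in E2 || apply Nat.leb_gt in E2;
      apply Nat.leb_le in E3 || apply Nat.leb_gt in E3; nia. }
  rewrite (sumR_ext _ (fun a => sumR (fun b => bR (Nat.leb (a * b) N) * bR (Nat.leb a s)) N
      + sumR (fun b => bR (Nat.leb (b * a) N) * bR (Nat.leb b s)) N
      - sumR (fun b => bR (Nat.leb a s) * bR (Nat.leb b s)) N)).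
  2:{ intros a Ha. rewrite <- sumR_plus, <- sumR_minus. auto. }
  rewrite sumR_minus, sumR_plus.
  rewrite (sumR_exchange (fun a b => bR (Nat.leb (b * a) N) * bR (Nat.leb b s))).
  rewrite !(hyp_E N s HsN), (hyp_E2 N s HsN). lra.
Qed.


Lemma div_R_bounds N a : (1 <= a)%nat ->
  INR N / INR a - 1 <= INR (N / a) <= INR N / INR a.
Proof.
  intros Ha. pose proof (Nat.div_mod N a ltac:(lia)).
  pose proof (Nat.mod_upper_bound N a ltac:(lia)).
  assert (hN : INR N = INR a * INR (N / a) + INR (N mod a)).
  { rewrite H at 1. rewrite plus_INR, mult_INR. auto. }
  assert (ha : 0 < INR a) by (apply lt_0_INR; lia).
  assert (hr : INR (N mod a) < INR a) by (apply lt_INR; auto).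
  assert (hr0 : 0 <= INR (N mod a)) by apply pos_INR.
  rewrite hN. split.
  - apply (Rmult_le_reg_r (INR a)); auto. field_simplify; lra.
  - apply (Rmult_le_reg_r (INR a)); auto. field_simplify; lra.
Qed.

Lemma sum_div_bounds N s :
  INR N * Hs s - INR s <= sumR (fun a => INR (N / a)) s <= INR N * Hs s.
Proof.
  induction s. simpl. lra.
  cbn [sumR Hs]. pose proof (div_R_bounds N (S s) ltac:(lia)). rewrite S_INR in *.
  unfold Rdiv in H. lra.
Qed.

Lemma D_asym N : (1 <= N)%nat ->
  Rabs (INR (divisor_sum N) - (INR N * ln (INR N) + (2 * EulerGamma - 1) * INR N))
    <= 8 * INR (Nat.sqrt N).
Proof.
  intros HN. rewrite hyperbola.
  set (s := Nat.sqrt N).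
  pose proof (Nat.sqrt_spec N ltac:(lia)) as Hsq. fold s in Hsq.
  assert (Hs1 : (1 <= s)%nat) by (destruct s; nia).
  assert (HN2 : (N <= s * s + 2 * s)%nat) by nia.
  set (n := INR N). set (sg := INR s).
  assert (hsg : 1 <= sg) by (unfold sg; apply (le_INR 1); lia).
  assert (h1 : sg * sg <= n) by (unfold sg, n; rewrite <- mult_INR; apply le_INR; lia).
  assert (h2 : n <= sg * sg + 2 * sg).
  { unfold sg, n. replace (INR s * INR s + 2 * INR s) with (INR (s * s + 2 * s)).
    apply le_INR; lia. rewrite plus_INR, !mult_INR. simpl. lra. }
  pose proof (Hs_bounds s Hs1) as HH. fold sg in HH.
  pose proof (sum_div_bounds N s) as HS. fold n sg in HS.
  set (H := Hs s) in *. set (Sm := sumR (fun a : nat => INR (N / a)) s) in *.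
  set (L := ln n - 2 * ln sg).
  assert (hL : L = ln (n / (sg * sg))).
  { unfold L. rewrite ln_div, ln_mult by nra. lra. }
  assert (hL0 : 0 <= L).
  { rewrite hL. rewrite <- ln_1.
    assert (h3 : 1 <= n / (sg * sg)). { apply (Rmult_le_reg_r (sg*sg)); [nra|]. unfold Rdiv. rewrite Rmult_assoc, Rinv_l by nra. nra. }
    destruct h3 as [h3|h3]. apply Rlt_le, ln_increasing; lra. rewrite <- h3; lra. }
  assert (hL1 : n * L <= 6 * sg).
  { assert (L <= n / (sg*sg) - 1) by (rewrite hL; apply ln_le_m1; apply Rdiv_lt_0_compat; nra).
    assert (n * (n / (sg*sg) - 1) <= 6 * sg).
    { replace (n * (n / (sg * sg) - 1)) with (n * (n - sg*sg) / (sg*sg)) by (field; nra).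
      apply (Rmult_le_reg_r (sg*sg)); [nra|]. unfold Rdiv. rewrite Rmult_assoc, Rinv_l by nra.
      nra. }
    assert (0 <= n) by nra. nra. }
  set (th := H - ln sg - EulerGamma).
  assert (ht : n * th <= 3 * sg).
  { assert (th <= / sg) by (unfold th; lra).
    assert (n * th <= n / sg) by (unfold Rdiv; apply Rmult_le_compat_l; nra).
    assert (n / sg <= 3 * sg).
    { apply (Rmult_le_reg_r sg); [lra|]. unfold Rdiv. rewrite Rmult_assoc, Rinv_l by lra. nra. }
    lra. }
  assert (ht0 : 0 <= n * th). { assert (0 <= th) by (unfold th; lra). apply Rmult_le_pos; nra. }
  assert (e : ln n = 2 * ln sg + L) by (unfold L; lra).
  rewrite e. apply Rabs_le.
  assert (Eq : 2 * Sm - sg * sg - (n * (2 * ln sg + L) + (2 * EulerGamma - 1) * n)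
    = 2 * (Sm - n * H) + 2 * (n * th) - n * L + (n - sg * sg)) by (unfold th; ring).
  assert (0 <= n * L) by (apply Rmult_le_pos; nra).
  rewrite Eq. split; lra.
Qed.


Lemma abs_ln_u u : 0 < u -> Rabs (ln u) <= u + / u.
Proof.
  intros hu. assert (0 < /u) by (apply Rinv_0_lt_compat; auto).
  apply Rabs_le. split.
  - pose proof (ln_le_m1 (/u) H). rewrite ln_Rinv in H0 by auto. lra.
  - pose proof (ln_le_m1 u hu). lra.
Qed.

Lemma ln_sqrt2 t : 0 < t -> ln t = 2 * ln (sqrt t).
Proof.
  intros ht. pose proof (sqrt_lt_R0 t ht).
  rewrite <- (sqrt_sqrt t) at 1 by lra. rewrite ln_mult by lra. ring.
Qed.

Lemma abs_ln_bound t : 0 < t -> Rabs (ln t) <= 2 * sqrt t + 2 / sqrt t.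
Proof.
  intros ht. pose proof (sqrt_lt_R0 t ht). rewrite ln_sqrt2 by auto.
  rewrite Rabs_mult, Rabs_right by lra. pose proof (abs_ln_u _ H). unfold Rdiv. lra.
Qed.

Lemma ln_le_2sqrt t : 0 < t -> ln t <= 2 * sqrt t.
Proof.
  intros ht. pose proof (sqrt_lt_R0 t ht). rewrite ln_sqrt2 by auto.
  pose proof (ln_le_m1 _ H). lra.
Qed.

Lemma INR_Int_part t : 0 <= t -> INR (Z.to_nat (Int_part t)) = IZR (Int_part t) /\ IZR (Int_part t) <= t < IZR (Int_part t) + 1.
Proof.
  intros ht. pose proof (base_Int_part t) as [h1 h2].
  assert (0 <= Int_part t)%Z.
  { assert (-1 < Int_part t)%Z by (apply lt_IZR; lra). lia. }
  rewrite INR_IZR_INZ, Z2Nat.id by auto. lra.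
Qed.

Lemma Delta_bound : exists DD, 0 <= DD /\ forall t, 0 < t -> Rabs (Defs.Delta t) <= DD * sqrt t.
Proof.
  set (g := Rabs (2 * EulerGamma - 1)).
  exists (12 + g). split. unfold g; pose proof (Rabs_pos (2 * EulerGamma - 1)); lra.
  intros t ht. pose proof (sqrt_lt_R0 t ht) as hst.
  assert (hg : 0 <= g) by apply Rabs_pos.
  destruct (Rlt_le_dec t 1) as [t1|t1].
  - assert (Int_part t = 0%Z) by (symmetry; apply Int_part_spec; simpl; lra).
    unfold Defs.Delta. rewrite H. simpl (Z.to_nat 0). change (INR (divisor_sum 0)) with 0.
    set (u := sqrt t) in *.
    assert (hu1 : u <= 1). { unfold u. rewrite <- sqrt_1. apply sqrt_le_1; lra. }
    assert (htu : t = u * u) by (unfold u; rewrite sqrt_sqrt; lra).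
    pose proof (abs_ln_bound t ht) as hl. fold u in hl.
    assert (Rabs (t * ln t) <= 4 * u).
    { rewrite Rabs_mult, (Rabs_right t) by lra. rewrite htu.
      assert (u * u * Rabs (ln (u*u)) <= u * u * (2 * u + 2 / u)).
      { apply Rmult_le_compat_l. nra. rewrite <- htu. auto. }
      assert (u * u * (2 * u + 2 / u) = 2 * u * u * u + 2 * u) by (field; lra).
      assert (u * u * (2 * u + 2 / u) = 2 * u * u * u + 2 * u) by (field; lra). nra. }
    assert (Rabs (t * (2 * EulerGamma - 1)) <= g * u).
    { rewrite Rabs_mult, (Rabs_right t) by lra. fold g.
      assert (t <= u) by nra. rewrite Rmult_comm. apply Rmult_le_compat_l; auto. }
    replace (0 - t * (ln t + 2 * EulerGamma - 1)) with (- (t * ln t) + - (t * (2 * EulerGamma - 1))) by ring.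
    pose proof (Rabs_triang (- (t * ln t)) (- (t * (2 * EulerGamma - 1)))).
    rewrite Rabs_Ropp in H2. rewrite Rabs_Ropp in H2. nra.
  - destruct (INR_Int_part t ltac:(lra)) as [hN [hN1 hN2]].
    set (N := Z.to_nat (Int_part t)) in *.
    set (n := INR N) in *.
    assert (HN : (1 <= N)%nat).
    { assert (0 < Int_part t)%Z by (apply lt_IZR; lra). unfold N; lia. }
    rewrite <- hN in hN1, hN2.
    assert (hn1 : 1 <= n) by (unfold n; apply (le_INR 1); auto).
    pose proof (D_asym N HN) as HD. fold n in HD.
    set (sg := INR (Nat.sqrt N)) in *.
    assert (hsg : sg <= sqrt t).
    { pose proof (Nat.sqrt_spec N ltac:(lia)) as Hsq.
      assert (sg * sg <= n) by (unfold sg, n; rewrite <- mult_INR; apply le_INR; lia).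
      assert (0 <= sg) by apply pos_INR.
      rewrite <- (sqrt_square sg) by auto. apply sqrt_le_1; nra. }
    assert (hs1 : 1 <= sqrt t) by (rewrite <- sqrt_1; apply sqrt_le_1; lra).
    pose proof (ln_le_2sqrt t ht).
    assert (hlnn : 0 <= ln n) by (rewrite <- ln_1; destruct hn1 as [h|h]; [apply Rlt_le, ln_increasing; lra| rewrite h; lra]).
    assert (hlt : ln n <= ln t) by (destruct hN1 as [h|h]; [apply Rlt_le, ln_increasing; lra| rewrite h; lra]).
    assert (hdiff : n * (ln t - ln n) <= t - n).
    { rewrite <- ln_div by lra. pose proof (ln_le_m1 (t / n) ltac:(apply Rdiv_lt_0_compat; lra)).
      assert (n * (t / n - 1) = t - n) by (field; lra). nra. }
    assert (hd1 : 0 <= t * ln t - n * ln n <= ln t + 1).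
    { replace (t * ln t - n * ln n) with ((t - n) * ln t + n * (ln t - ln n)) by ring.
      split; nra. }
    assert (hg2 : Rabs ((2 * EulerGamma - 1) * (n - t)) <= g).
    { rewrite Rabs_mult. fold g. assert (Rabs (n - t) <= 1) by (apply Rabs_le; lra). nra. }
    unfold Defs.Delta. fold N.
    replace (INR (divisor_sum N) - t * (ln t + 2 * EulerGamma - 1)) with
      ((INR (divisor_sum N) - (n * ln n + (2 * EulerGamma - 1) * n)) - (t * ln t - n * ln n)
        + (2 * EulerGamma - 1) * (n - t)) by ring.
    set (A := INR (divisor_sum N) - (n * ln n + (2 * EulerGamma - 1) * n)) in *.
    set (B := t * ln t - n * ln n) in *.
    set (G := (2 * EulerGamma - 1) * (n - t)) in *.
    pose proof (Rabs_triang (A - B) G) as T1.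
    pose proof (Rabs_triang A (- B)) as T2.
    rewrite Rabs_Ropp in T2. rewrite (Rabs_right B) in T2 by lra.
    assert (g <= g * sqrt t) by nra.
    unfold Rminus in T1 |- *. lra.
Qed.


Lemma cont_aux (c k : R) z : 0 < z -> continuous (fun t => c - t * (ln t + k)) z.
Proof.
  intros hz. apply (@ex_derive_continuous R_AbsRing R_NormedModule). auto_derive. lra.
Qed.

Lemma exRInt_Delta_base (h : R -> R) (m : nat) a b :
  (forall z, 0 < z -> ex_derive h z) -> 0 < a -> a <= b ->
  INR m <= a -> b <= INR m + 1 -> ex_RInt (fun t => Defs.Delta t * h t) a b.
Proof.
  intros hc ha hab h1 h2.
  apply (ex_RInt_ext (fun t => (INR (divisor_sum m) - t * (ln t + 2 * EulerGamma - 1)) * h t)).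
  - intros t Ht. rewrite Rmin_left, Rmax_right in Ht by lra.
    unfold Defs.Delta. f_equal. f_equal.
    assert (Int_part t = Z.of_nat m).
    { symmetry. apply Int_part_spec. rewrite <- INR_IZR_INZ. lra. }
    rewrite H, Nat2Z.id. auto.
  - apply (@ex_RInt_continuous R_CompleteNormedModule). intros z Hz. rewrite Rmin_left, Rmax_right in Hz by lra.
    apply (@ex_derive_continuous R_AbsRing R_NormedModule). auto_derive. split. lra. split; auto. apply hc. lra.
Qed.

Lemma exRInt_Delta (h : R -> R) a b :
  (forall z, 0 < z -> ex_derive h z) -> 0 < a -> a <= b ->
  ex_RInt (fun t => Defs.Delta t * h t) a b.
Proof.
  intros hc ha hab.
  destruct (INR_Int_part a ltac:(lra)) as [hm [hm1 hm2]].
  set (m := Z.to_nat (Int_part a)) in *. rewrite <- hm in hm1, hm2.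
  assert (Q : forall n b, a <= b -> b <= INR m + 1 + INR n -> ex_RInt (fun t => Defs.Delta t * h t) a b).
  { induction n; intros b' h1 h2.
    - apply (exRInt_Delta_base h m); auto; simpl in h2; lra.
    - destruct (Rle_lt_dec b' (INR m + 1 + INR n)) as [h3|h3].
      + apply IHn; auto.
      + set (c := INR (m + 1 + n)).
        assert (hc' : c = INR m + 1 + INR n) by (unfold c; rewrite !plus_INR; change (INR 1) with 1; lra).
        pose proof (pos_INR n). apply (ex_RInt_Chasles _ a c b').
        * pose proof (pos_INR n). apply IHn; lra.
        * apply (exRInt_Delta_base h (m + 1 + n)); fold c; try lra. auto.
          rewrite S_INR in h2. lra. }
  apply (Q (Z.to_nat (up b))); auto.
  destruct (archimed b) as [hb _].
  assert (0 <= up b)%Z by (apply le_IZR; lra).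
  rewrite (INR_IZR_INZ (Z.to_nat (up b))), Z2Nat.id by auto. pose proof (pos_INR m). lra.
Qed.

Lemma is_RInt_pow32 (K w T : R) : 0 < w -> w <= T ->
  is_RInt (fun t => K / (t * sqrt t)) w T (2 * K / sqrt w - 2 * K / sqrt T).
Proof.
  intros hw hT.
  assert (E : 2 * K / sqrt w - 2 * K / sqrt T = minus ((fun t => - 2 * K / sqrt t) T) ((fun t => - 2 * K / sqrt t) w)).
  { unfold minus, plus, opp. simpl. field. split; apply Rgt_not_eq, sqrt_lt_R0; lra. }
  rewrite E. apply (@is_RInt_derive R_CompleteNormedModule (fun t => - 2 * K / sqrt t)).
  - intros x Hx. rewrite Rmin_left, Rmax_right in Hx by lra.
    pose proof (sqrt_lt_R0 x ltac:(lra)) as hs.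
    auto_derive. lra.
    assert (hx : x = sqrt x * sqrt x) by (rewrite sqrt_sqrt; lra).
    set (u := sqrt x) in *. rewrite hx. field. lra.
  - intros x Hx. rewrite Rmin_left, Rmax_right in Hx by lra.
    pose proof (sqrt_lt_R0 x ltac:(lra)) as hs.
    apply (@ex_derive_continuous R_AbsRing R_NormedModule). auto_derive. split. lra. nra.
Qed.

Lemma termC (tr : R -> R) DD w T :
  (forall z, 0 < z -> ex_derive (fun t => tr t / t ^ 2) z) ->
  (forall t, Rabs (tr t) <= 1) -> 0 <= DD ->
  (forall t, 0 < t -> Rabs (Defs.Delta t) <= DD * sqrt t) ->
  0 < w -> w <= T ->
  Rabs (RInt (fun t => Defs.Delta t * tr t / t ^ 2) w T) <= 2 * DD / sqrt w.
Proof.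
  intros hd hb hDD hD hw hT.
  assert (exF : ex_RInt (fun t => Defs.Delta t * tr t / t ^ 2) w T).
  { apply (ex_RInt_ext (fun t => Defs.Delta t * (tr t / t ^ 2))).
    intros; unfold Rdiv; symmetry; apply Rmult_assoc. apply exRInt_Delta; auto. }
  pose proof (is_RInt_pow32 DD w T hw hT) as I1.
  pose proof (is_RInt_pow32 (- DD) w T hw hT) as I2.
  assert (pw : 0 < sqrt w) by (apply sqrt_lt_R0; lra).
  assert (pT : 0 < sqrt T) by (apply sqrt_lt_R0; lra).
  assert (pt : forall t, w < t < T -> Rabs (Defs.Delta t * tr t / t ^ 2) <= DD / (t * sqrt t)).
  { intros t Ht. assert (0 < t) by lra. pose proof (sqrt_lt_R0 t H) as hs.
    assert (htt : t = sqrt t * sqrt t) by (rewrite sqrt_sqrt; lra).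
    unfold Rdiv. rewrite !Rabs_mult. rewrite Rabs_inv, (Rabs_right (t ^ 2)) by (apply Rle_ge, pow_le; lra).
    pose proof (hD t H). pose proof (hb t). pose proof (Rabs_pos (Defs.Delta t)). pose proof (Rabs_pos (tr t)).
    assert (Rabs (Defs.Delta t) * Rabs (tr t) <= DD * sqrt t) by nra.
    replace (DD * / (t * sqrt t)) with ((DD * sqrt t) * / (t ^ 2)).
    apply Rmult_le_compat_r. apply Rlt_le, Rinv_0_lt_compat; nra. auto.
    assert (ht2 : t ^ 2 = (t * sqrt t) * sqrt t) by (rewrite Rmult_assoc, <- htt; ring).
    rewrite ht2. field. split; lra. }
  assert (U : RInt (fun t => Defs.Delta t * tr t / t ^ 2) w T <= 2 * DD / sqrt w - 2 * DD / sqrt T).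
  { rewrite <- (is_RInt_unique _ _ _ _ I1). apply RInt_le; auto.
    eexists; eauto. intros t Ht. pose proof (pt t Ht). apply Rabs_le_between in H. lra. }
  assert (L : 2 * - DD / sqrt w - 2 * - DD / sqrt T <= RInt (fun t => Defs.Delta t * tr t / t ^ 2) w T).
  { rewrite <- (is_RInt_unique _ _ _ _ I2). apply RInt_le; auto.
    eexists; eauto. intros t Ht. pose proof (pt t Ht). apply Rabs_le_between in H.
    unfold Rdiv in *. lra. }
  assert (0 <= 2 * DD / sqrt T) by (apply Rmult_le_pos; [lra| apply Rlt_le, Rinv_0_lt_compat; lra]).
  apply Rabs_le. unfold Rdiv in *. split; lra.
Qed.

Definition gg (t : R) := (ln t + 2 * EulerGamma) / (PI * t).
Definition gg' (t : R) := (1 - (ln t + 2 * EulerGamma)) / (PI * t ^ 2).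

Lemma PI_ge1 : 1 <= PI.
Proof. pose proof PI2_1. lra. Qed.

Lemma gg_derive t : 0 < t -> is_derive gg t (gg' t).
Proof.
  intros ht. pose proof PI_ge1. unfold gg, gg'. auto_derive. split. lra. nra.
  field. lra.
Qed.

Lemma gg_cont t : 0 < t -> continuous gg t.
Proof. intros ht. apply (@ex_derive_continuous R_AbsRing R_NormedModule). eexists. apply gg_derive; auto. Qed.
Lemma gg'_cont t : 0 < t -> continuous gg' t.
Proof. intros ht. pose proof PI_ge1. apply (@ex_derive_continuous R_AbsRing R_NormedModule). unfold gg'. auto_derive. nra. Qed.

Lemma termA (S sig : R -> R) k M c w T :
  (forall t, is_derive S t (sig t)) -> (forall t, continuous sig t) ->
  (forall t, Rabs (S t) <= k) -> 0 <= k ->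
  (forall t, c <= t -> 1 + Rabs (ln t) + 2 * Rabs EulerGamma <= M * sqrt t) ->
  0 < c -> c <= w -> w <= T ->
  Rabs (RInt (fun t => sig t / (PI * t) * (ln t + 2 * EulerGamma)) w T) <= 4 * k * M / sqrt w.
Proof.
  intros hS hsig hSb hk hM hc hw hT.
  pose proof PI_ge1 as hpi.
  assert (Scont : forall t, continuous S t).
  { intros t. apply (@ex_derive_continuous R_AbsRing R_NormedModule). eexists; apply hS. }
  assert (c1 : forall t, 0 < t -> continuous (fun t => sig t * gg t) t).
  { intros t ht. apply (continuous_mult sig gg); auto. apply gg_cont; auto. }
  assert (c2 : forall t, 0 < t -> continuous (fun t => S t * gg' t) t).
  { intros t ht. apply (continuous_mult S gg'); auto. apply gg'_cont; auto. }
  assert (hw0 : 0 < w) by lra.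
  assert (e1 : ex_RInt (fun t => sig t * gg t) w T).
  { apply (@ex_RInt_continuous R_CompleteNormedModule). intros z Hz.
    rewrite Rmin_left, Rmax_right in Hz by lra. apply c1; lra. }
  assert (e2 : ex_RInt (fun t => S t * gg' t) w T).
  { apply (@ex_RInt_continuous R_CompleteNormedModule). intros z Hz.
    rewrite Rmin_left, Rmax_right in Hz by lra. apply c2; lra. }
  assert (I0 : is_RInt (fun t => plus (sig t * gg t) (S t * gg' t)) w T
                 (minus (S T * gg T) (S w * gg w))).
  { apply (@is_RInt_derive R_CompleteNormedModule (fun t => S t * gg t)).
    - intros x Hx. rewrite Rmin_left, Rmax_right in Hx by lra.
      exact (is_derive_mult S gg x (sig x) (gg' x) (hS x) (gg_derive x ltac:(lra)) Rmult_comm).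
    - intros x Hx. rewrite Rmin_left, Rmax_right in Hx by lra.
      apply (continuous_plus (fun t => sig t * gg t) (fun t => S t * gg' t)); [apply c1|apply c2]; lra. }
  apply (@is_RInt_unique R_CompleteNormedModule) in I0. rewrite (@RInt_plus R_CompleteNormedModule) in I0 by auto.
  assert (E : RInt (fun t => sig t / (PI * t) * (ln t + 2 * EulerGamma)) w T = RInt (fun t => sig t * gg t) w T).
  { apply RInt_ext. intros x Hx. unfold gg. unfold Rdiv. rewrite !Rmult_assoc. f_equal. apply Rmult_comm. }
  rewrite E.
  change (RInt (fun t => sig t * gg t) w T + RInt (fun t => S t * gg' t) w T = S T * gg T - S w * gg w) in I0.
  assert (pw : 0 < sqrt w) by (apply sqrt_lt_R0; lra).
  assert (pT : 0 < sqrt T) by (apply sqrt_lt_R0; lra).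
  assert (swT : sqrt w <= sqrt T) by (apply sqrt_le_1; lra).
  assert (ggb : forall t, c <= t -> Rabs (gg t) <= M / sqrt t).
  { intros t ht. pose proof (hM t ht). pose proof (sqrt_lt_R0 t ltac:(lra)) as hs.
    assert (htt : t = sqrt t * sqrt t) by (rewrite sqrt_sqrt; lra).
    unfold gg. unfold Rdiv. rewrite Rabs_mult, Rabs_inv, (Rabs_right (PI * t)) by nra.
    pose proof (Rabs_triang (ln t) (2 * EulerGamma)). rewrite Rabs_mult, (Rabs_right 2) in H0 by lra.
    apply (Rmult_le_reg_r (PI * t)). nra. rewrite Rmult_assoc, Rinv_l by nra.
    assert (h5 : t / sqrt t = sqrt t) by (rewrite htt at 1; field; lra).
    replace (M * / sqrt t * (PI * t)) with (PI * (M * (t / sqrt t))) by (unfold Rdiv; ring).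
    rewrite h5.
    assert (0 <= M * sqrt t) by (pose proof (Rabs_pos (ln t)); pose proof (Rabs_pos EulerGamma); lra).
    assert (M * sqrt t <= PI * (M * sqrt t)) by nra.
    lra. }
  assert (B1 : Rabs (S T * gg T - S w * gg w) <= 2 * k * M / sqrt w).
  { pose proof (ggb T ltac:(lra)). pose proof (ggb w ltac:(lra)).
    pose proof (hSb T). pose proof (hSb w).
    assert (M / sqrt T <= M / sqrt w).
    { assert (0 <= M). { pose proof (hM w hw). pose proof (Rabs_pos (ln w)). pose proof (Rabs_pos EulerGamma). nra. }
      unfold Rdiv. apply Rmult_le_compat_l; auto. apply Rinv_le_contravar; lra. }
    rewrite Rabs_minus_sym.
    pose proof (Rabs_triang (S w * gg w) (- (S T * gg T))). rewrite Rabs_Ropp in H4.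
    rewrite !Rabs_mult in H4.
    pose proof (Rabs_pos (S T)). pose proof (Rabs_pos (gg T)). pose proof (Rabs_pos (S w)). pose proof (Rabs_pos (gg w)).
    assert (Rabs (S T) * Rabs (gg T) <= k * (M / sqrt w)) by (apply Rmult_le_compat; lra).
    assert (Rabs (S w) * Rabs (gg w) <= k * (M / sqrt w)) by (apply Rmult_le_compat; lra).
    unfold Rminus. unfold Rdiv in *. lra. }
  assert (gg'b : forall t, c <= t -> Rabs (gg' t) <= M / (t * sqrt t)).
  { intros t ht. pose proof (hM t ht). pose proof (sqrt_lt_R0 t ltac:(lra)) as hs.
    assert (htt : t = sqrt t * sqrt t) by (rewrite sqrt_sqrt; lra).
    assert (ht2 : 0 < t ^ 2) by (apply pow_lt; lra).
    unfold gg'. unfold Rdiv. rewrite Rabs_mult, Rabs_inv, (Rabs_right (PI * t ^ 2)) by nra.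
    assert (Rabs (1 - (ln t + 2 * EulerGamma)) <= 1 + Rabs (ln t) + 2 * Rabs EulerGamma).
    { pose proof (Rabs_triang 1 (- (ln t + 2 * EulerGamma))). rewrite Rabs_Ropp, Rabs_R1 in H0.
      pose proof (Rabs_triang (ln t) (2 * EulerGamma)). rewrite Rabs_mult, (Rabs_right 2) in H1 by lra.
      unfold Rminus. lra. }
    apply (Rmult_le_reg_r (PI * t ^ 2)). nra. rewrite Rmult_assoc, Rinv_l by nra.
    assert (h5 : t ^ 2 / (t * sqrt t) = sqrt t) by (rewrite htt at 1 2; field; lra).
    replace (M * / (t * sqrt t) * (PI * t ^ 2)) with (PI * (M * (t ^ 2 / (t * sqrt t)))) by (unfold Rdiv; ring).
    rewrite h5.
    assert (0 <= M * sqrt t) by (pose proof (Rabs_pos (ln t)); pose proof (Rabs_pos EulerGamma); lra).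
    assert (M * sqrt t <= PI * (M * sqrt t)) by nra.
    lra. }
  pose proof (is_RInt_pow32 (k * M) w T hw0 hT) as I1.
  pose proof (is_RInt_pow32 (- (k * M)) w T hw0 hT) as I2.
  assert (pt : forall t, w < t < T -> Rabs (S t * gg' t) <= k * M / (t * sqrt t)).
  { intros t Ht. rewrite Rabs_mult. pose proof (hSb t). pose proof (gg'b t ltac:(lra)).
    pose proof (Rabs_pos (gg' t)).
    replace (k * M / (t * sqrt t)) with (k * (M / (t * sqrt t))) by (unfold Rdiv; ring).
    apply Rmult_le_compat; auto. apply Rabs_pos. }
  assert (U : RInt (fun t => S t * gg' t) w T <= 2 * (k * M) / sqrt w - 2 * (k * M) / sqrt T).
  { rewrite <- (is_RInt_unique _ _ _ _ I1). apply RInt_le; auto.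
    eexists; eauto. intros t Ht. pose proof (pt t Ht). apply Rabs_le_between in H. lra. }
  assert (L : 2 * - (k * M) / sqrt w - 2 * - (k * M) / sqrt T <= RInt (fun t => S t * gg' t) w T).
  { rewrite <- (is_RInt_unique _ _ _ _ I2). apply RInt_le; auto.
    eexists; eauto. intros t Ht. pose proof (pt t Ht). apply Rabs_le_between in H.
    unfold Rdiv in *. lra. }
  assert (0 <= M). { pose proof (hM w hw). pose proof (Rabs_pos (ln w)). pose proof (Rabs_pos EulerGamma).
     pose proof (sqrt_lt_R0 w hw0). nra. }
  assert (0 <= 2 * (k * M) / sqrt T).
  { apply Rmult_le_pos. apply Rmult_le_pos; [lra| apply Rmult_le_pos; lra]. apply Rlt_le, Rinv_0_lt_compat; lra. }
  replace (RInt (fun t => sig t * gg t) w T) with ((S T * gg T - S w * gg w) - RInt (fun t => S t * gg' t) w T) by lra.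
  apply Rabs_le_between in B1.
  apply Rabs_le. unfold Rdiv in *. split; lra.
Qed.


Lemma M_exists c : 0 < c -> exists M, forall t, c <= t ->
  1 + Rabs (ln t) + 2 * Rabs EulerGamma <= M * sqrt t.
Proof.
  intros hc. set (g := Rabs EulerGamma).
  exists (2 + 2 / c + (1 + 2 * g) * (1 + 1 / c)).
  intros t ht. assert (ht0 : 0 < t) by lra.
  pose proof (sqrt_lt_R0 t ht0) as hs.
  assert (htt : t = sqrt t * sqrt t) by (rewrite sqrt_sqrt; lra).
  pose proof (abs_ln_bound t ht0) as hl.
  assert (h1 : 1 / sqrt t <= sqrt t / c).
  { apply (Rmult_le_reg_r (sqrt t * c)). nra.
    replace (1 / sqrt t * (sqrt t * c)) with c by (field; lra).
    replace (sqrt t / c * (sqrt t * c)) with (sqrt t * sqrt t) by (field; lra). lra. }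
  assert (h2 : 1 <= sqrt t * (1 + 1 / c)).
  { destruct (Rle_lt_dec 1 (sqrt t)).
    - assert (0 <= sqrt t * (1 / c)) by (apply Rmult_le_pos; [lra| unfold Rdiv; rewrite Rmult_1_l; apply Rlt_le, Rinv_0_lt_compat; lra]).
      nra.
    - assert (c <= sqrt t) by nra.
      assert (1 <= sqrt t * (1 / c)).
      { apply (Rmult_le_reg_r c). lra. replace (sqrt t * (1 / c) * c) with (sqrt t) by (field; lra). lra. }
      nra. }
  assert (hg : 0 <= g) by apply Rabs_pos.
  fold g.
  assert (2 / sqrt t <= 2 * (sqrt t / c)) by (unfold Rdiv in *; lra).
  assert ((1 + 2 * g) * 1 <= (1 + 2 * g) * (sqrt t * (1 + 1 / c))) by (apply Rmult_le_compat_l; lra).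
  replace ((2 + 2 / c + (1 + 2 * g) * (1 + 1 / c)) * sqrt t) with
    (2 * sqrt t + 2 * (sqrt t / c) + (1 + 2 * g) * (sqrt t * (1 + 1 / c))) by (field; lra).
  lra.
Qed.

Lemma trig_facts y : 0 < y ->
  (forall t, is_derive (fun t => sin (2 * PI * t * y) / (2 * PI * y)) t (cos (2 * PI * t * y))) /\
  (forall t, is_derive (fun t => - cos (2 * PI * t * y) / (2 * PI * y)) t (sin (2 * PI * t * y))) /\
  (forall t, continuous (fun t => cos (2 * PI * t * y)) t) /\
  (forall t, continuous (fun t => sin (2 * PI * t * y)) t) /\
  (forall z, 0 < z -> ex_derive (fun t => cos (2 * PI * t * y) / t ^ 2) z) /\
  (forall z, 0 < z -> ex_derive (fun t => sin (2 * PI * t * y) / t ^ 2) z).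
Proof.
  intros hy. pose proof PI_ge1.
  assert (0 < 2 * PI * y) by nra.
  split; [|split; [|split; [|split; [|split]]]]; intros.
  - auto_derive. auto. field. lra.
  - auto_derive. auto. field. lra.
  - apply (@ex_derive_continuous R_AbsRing R_NormedModule). auto_derive. auto.
  - apply (@ex_derive_continuous R_AbsRing R_NormedModule). auto_derive. auto.
  - auto_derive. nra.
  - auto_derive. nra.
Qed.

Lemma eps_bounds c M DD y w :
  0 < c -> (forall t, c <= t -> 1 + Rabs (ln t) + 2 * Rabs EulerGamma <= M * sqrt t) ->
  0 <= DD -> (forall t, 0 < t -> Rabs (Defs.Delta t) <= DD * sqrt t) ->
  0 < y -> c <= w ->
  Rabs (eps1_re y w) <= (4 * M / y + 3 * DD) / sqrt w /\
  Rabs (eps1_im y w) <= (4 * M / y + 3 * DD) / sqrt w.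
Proof.
  intros hc hM hDD hD hy hw.
  destruct (trig_facts y hy) as [d1 [d2 [c1 [c2 [e1 e2]]]]].
  pose proof PI_ge1 as hpi.
  assert (hw0 : 0 < w) by lra.
  pose proof (sqrt_lt_R0 w hw0) as hs.
  assert (hww : w = sqrt w * sqrt w) by (rewrite sqrt_sqrt; lra).
  assert (hM0 : 0 <= M). { pose proof (hM w hw). pose proof (Rabs_pos (ln w)). pose proof (Rabs_pos EulerGamma). nra. }
  set (k := / (2 * PI * y)).
  assert (hk : 0 <= k) by (apply Rlt_le, Rinv_0_lt_compat; nra).
  assert (hky : k <= / y).
  { unfold k. apply Rinv_le_contravar. auto. nra. }
  assert (hkM : 4 * k * M / sqrt w <= 4 * M / y / sqrt w).
  { unfold Rdiv. apply Rmult_le_compat_r. apply Rlt_le, Rinv_0_lt_compat; lra. nra. }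
  assert (hB : forall tr, Rabs tr <= 1 -> Rabs (tr / w * Defs.Delta w) <= DD / sqrt w).
  { intros tr htr. unfold Rdiv. rewrite !Rabs_mult, Rabs_inv, (Rabs_right w) by lra.
    pose proof (hD w hw0). pose proof (Rabs_pos tr). pose proof (Rabs_pos (Defs.Delta w)).
    assert (Rabs tr * / w * Rabs (Defs.Delta w) <= 1 * / w * (DD * sqrt w)).
    { apply Rmult_le_compat; try nra. apply Rmult_le_pos; auto. apply Rlt_le, Rinv_0_lt_compat; lra.
      apply Rmult_le_compat_r; auto. apply Rlt_le, Rinv_0_lt_compat; lra. }
    replace (DD * / sqrt w) with (1 * / w * (DD * sqrt w)). lra.
    rewrite hww at 1. field. lra. }
  assert (hA : forall S sig, (forall t, is_derive S t (sig t)) -> (forall t, continuous sig t) ->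
     (forall t, Rabs (S t) <= k) ->
     Rabs (ImpInt (fun t => sig t / (PI * t) * (ln t + 2 * EulerGamma)) w) <= 4 * k * M / sqrt w).
  { intros S sig hS hsig hSb. apply ImpInt_bound. intros T hT.
    apply (termA S sig k M c w T); auto. }
  assert (hC : forall tr, (forall z, 0 < z -> ex_derive (fun t => tr t / t ^ 2) z) -> (forall t, Rabs (tr t) <= 1) ->
     Rabs (ImpInt (fun t => Defs.Delta t * tr t / t ^ 2) w) <= 2 * DD / sqrt w).
  { intros tr h1 h2. apply ImpInt_bound. intros T hT. apply termC; auto. }
  assert (hk1 : forall u, Rabs u <= 1 -> Rabs (u / (2 * PI * y)) <= k).
  { intros u hu. unfold Rdiv. rewrite Rabs_mult, (Rabs_inv (2 * PI * y)), (Rabs_right (2 * PI * y)) by nra.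
    fold k. pose proof (Rabs_pos u). nra. }
  assert (hsin : forall t, Rabs (sin t) <= 1) by (intros; apply Rabs_le; apply SIN_bound).
  assert (hcos : forall t, Rabs (cos t) <= 1) by (intros; apply Rabs_le; apply COS_bound).
  assert (hA1 := hA _ _ d1 c1 (fun t => hk1 _ (hsin _))).
  assert (hA2 := hA _ _ d2 c2 (fun t => hk1 _ ltac:(rewrite Rabs_Ropp; apply hcos))).
  assert (hC1 := hC _ e1 (fun t => hcos _)).
  assert (hC2 := hC _ e2 (fun t => hsin _)).
  assert (hB1 := hB _ (hcos (2 * PI * w * y))).
  assert (hB2 := hB _ (hsin (2 * PI * w * y))).
  unfold eps1_re, eps1_im. cbv beta in *.
  split.
  - set (A := ImpInt (fun t => cos (2 * PI * t * y) / (PI * t) * (ln t + 2 * EulerGamma)) w) in *.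
    set (B := cos (2 * PI * w * y) / w * Defs.Delta w) in *.
    set (C := ImpInt (fun t => Defs.Delta t * cos (2 * PI * t * y) / t ^ 2) w) in *.
    pose proof (Rabs_triang (- A + B) (- C)). pose proof (Rabs_triang (- A) B).
    rewrite Rabs_Ropp in H, H0.
    replace ((4 * M / y + 3 * DD) / sqrt w) with (4 * M / y / sqrt w + DD / sqrt w + 2 * DD / sqrt w) by (field; lra).
    unfold Rminus. lra.
  - set (A := ImpInt (fun t => sin (2 * PI * t * y) / (PI * t) * (ln t + 2 * EulerGamma)) w) in *.
    set (B := sin (2 * PI * w * y) / w * Defs.Delta w) in *.
    set (C := ImpInt (fun t => Defs.Delta t * sin (2 * PI * t * y) / t ^ 2) w) in *.
    pose proof (Rabs_triang (- A + B) (- C)). pose proof (Rabs_triang (- A) B).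
    rewrite Rabs_Ropp in H, H0.
    replace ((4 * M / y + 3 * DD) / sqrt w) with (4 * M / y / sqrt w + DD / sqrt w + 2 * DD / sqrt w) by (field; lra).
    unfold Rminus. lra.
Qed.


Lemma Cmod_le_sum p q : Cmod (p, q) <= Rabs p + Rabs q.
Proof.
  unfold Cmod. change (sqrt (p ^ 2 + q ^ 2) <= Rabs p + Rabs q).
  rewrite <- (pow2_abs p), <- (pow2_abs q).
  pose proof (Rabs_pos p); pose proof (Rabs_pos q).
  set (a := Rabs p) in *. set (b := Rabs q) in *.
  rewrite <- (sqrt_square (a + b)) by lra.
  apply sqrt_le_1; nra.
Qed.

Theorem proposition13 :
  forall K1 K2 : R, 0 < K1 -> 0 < K2 ->
  exists C0 : R, forall x v : R,
    0 < x -> x <= K1 -> 0 < v -> K2 <= x ^ 2 * v ->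
    Cmod (Cminus (eps1 x v) (Cmult (RtoC x) (Cconj (eps1 (/ x) (x ^ 2 * v)))))
      <= C0 * / sqrt (x ^ 2 * v).
Proof.
  intros K1 K2 hK1 hK2.
  set (c := Rmin K2 (K2 / K1 ^ 2)).
  assert (hc : 0 < c) by (unfold c; apply Rmin_glb_lt; auto; apply Rdiv_lt_0_compat; auto; apply pow_lt; auto).
  destruct (M_exists c hc) as [M hM].
  destruct Delta_bound as [DD [hDD hD]].
  exists (2 * ((4*M + 3*DD*K1) + (4*M*K1^2 + 3*DD*K1))).
  intros x v hx hxK hv hK.
  assert (hx2 : x ^ 2 <= K1 ^ 2) by (apply pow_incr; lra).
  assert (hx20 : 0 < x ^ 2) by (apply pow_lt; lra).
  assert (hK10 : 0 < K1 ^ 2) by (apply pow_lt; lra).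
  assert (hvc : c <= v).
  { unfold c. apply Rle_trans with (K2 / K1 ^ 2). apply Rmin_r.
    apply (Rmult_le_reg_r (K1 ^ 2)); auto. unfold Rdiv. rewrite Rmult_assoc, Rinv_l by lra. nra. }
  assert (hwc : c <= x ^ 2 * v) by (unfold c; pose proof (Rmin_l K2 (K2 / K1 ^ 2)); lra).
  destruct (eps_bounds c M DD x v hc hM hDD hD hx hvc) as [a1 a2].
  destruct (eps_bounds c M DD (/ x) (x ^ 2 * v) hc hM hDD hD ltac:(apply Rinv_0_lt_compat; lra) hwc) as [b1 b2].
  pose proof (sqrt_lt_R0 v hv) as hsv.
  assert (hQ : sqrt (x ^ 2 * v) = x * sqrt v).
  { rewrite sqrt_mult by lra. f_equal. replace (x ^ 2) with (x * x) by ring. apply sqrt_square; lra. }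
  rewrite hQ in *.
  replace (4 * M / / x) with (4 * M * x) in b1, b2 by (field; lra).
  assert (ea : (4 * M / x + 3 * DD) / sqrt v <= (4 * M + 3 * DD * K1) * / (x * sqrt v)).
  { replace ((4 * M / x + 3 * DD) / sqrt v) with ((4 * M + 3 * DD * x) * / (x * sqrt v)) by (field; lra).
    apply Rmult_le_compat_r. apply Rlt_le, Rinv_0_lt_compat; nra. nra. }
  assert (hM0 : 0 <= M). { pose proof (hM v hvc). pose proof (Rabs_pos (ln v)). pose proof (Rabs_pos EulerGamma). nra. }
  assert (eb : x * ((4 * M * x + 3 * DD) / (x * sqrt v)) <= (4 * M * K1 ^ 2 + 3 * DD * K1) * / (x * sqrt v)).
  { replace (x * ((4 * M * x + 3 * DD) / (x * sqrt v))) with ((4 * M * x ^ 2 + 3 * DD * x) * / (x * sqrt v)) by (field; lra).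
    apply Rmult_le_compat_r. apply Rlt_le, Rinv_0_lt_compat; nra.
    assert (4 * M * x ^ 2 <= 4 * M * K1 ^ 2) by nra. nra. }
  unfold eps1, Cminus, Cmult, Cconj, RtoC. simpl fst. simpl snd.
  set (p1 := eps1_re x v) in *. set (p2 := eps1_im x v) in *.
  set (q1 := eps1_re (/ x) (x ^ 2 * v)) in *. set (q2 := eps1_im (/ x) (x ^ 2 * v)) in *.
  set (I := / (x * sqrt v)) in *.
  match goal with |- Cmod ?z <= _ => replace z with (p1 - x * q1, p2 + x * q2) end.
  2:{ unfold Cplus, Copp, q1, q2. simpl. f_equal; ring. }
  eapply Rle_trans. apply Cmod_le_sum.
  assert (Rabs (x * q1) <= x * ((4 * M * x + 3 * DD) / (x * sqrt v))) by (rewrite Rabs_mult, Rabs_right by lra; apply Rmult_le_compat_l; lra).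
  assert (Rabs (x * q2) <= x * ((4 * M * x + 3 * DD) / (x * sqrt v))) by (rewrite Rabs_mult, Rabs_right by lra; apply Rmult_le_compat_l; lra).
  pose proof (Rabs_triang p1 (- (x * q1))). rewrite Rabs_Ropp in H1.
  pose proof (Rabs_triang p2 (x * q2)).
  unfold Rminus. lra.
Qed.
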